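(* Let $v_1,\dots,v_m$ be nonzero vectors spanning $\mathbb{R}^n$ ($m\ge n$) such that $(\mathbb{R}^n,(v_i)_{i=1}^m)$ is irreducible, and let $c=(c_i)_{i=1}^m$ with $c_i>0$, $\sum_ic_i=n$. Let $D_c=\inf\{\det(\sum_i\lambda_iv_i\otimes v_i)/\prod_i\lambda_i^{c_i};\ \lambda_i>0\}$. If $(\lambda_i)_{i=1}^m$ and $(\mu_i)_{i=1}^m$ are $m$-tuples of positive numbers both attaining this infimum, then there exists $r\in\mathbb{R}$ such that $\lambda_i=r\mu_i$ for all $i$.
   Context: The relation $\bowtie$ on $\{1,\dots,m\}$: $i\bowtie j$ iff there is $K\subset\{1,\dots,m\}$ with $|K|=n-1$ such that both $(v_i,(v_k)_{k\in K})$ and $(v_j,(v_k)_{k\in K})$ are bases of $\mathbb{R}^n$. $(\mathbb{R}^n,(v_i)_{i=1}^m)$ is irreducible if any two indices are joined by a finite chain of $\bowtie$-related indices. $v\otimes v=vv^T$. *)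

(* Defs.v *)
From HB Require Import structures.
From mathcomp Require Import all_boot all_order all_algebra.
From mathcomp Require Import all_classical all_reals all_analysis.
From Stdlib Require Import Relations.
Set Implicit Arguments. Unset Strict Implicit. Unset Printing Implicit Defensive.
Import Order.TTheory GRing.Theory Num.Theory.
Local Open Scope ring_scope.

Section Defs.
Variables (R : realType) (n m : nat).

Definition is_basis (s : seq 'rV[R]_n) : bool :=
  (size s == n) && row_free (\matrix_(k < size s) nth 0 s k).

Definition spans (v : 'I_m -> 'rV[R]_n) : bool := row_full (\matrix_(i < m) v i).

Definition bowtie (v : 'I_m -> 'rV[R]_n) (i j : 'I_m) : Prop :=
  exists K : {set 'I_m}, #|K| = n.-1 /\
    is_basis (v i :: [seq v k | k <- enum K]) /\
    is_basis (v j :: [seq v k | k <- enum K]).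

Definition irreducible_family (v : 'I_m -> 'rV[R]_n) : Prop :=
  forall i j : 'I_m, clos_refl_trans 'I_m (bowtie v) i j.

(* v ⊗ v = v v^T  (v a row vector here, so this is v^T *m v) *)
Definition tens (x : 'rV[R]_n) : 'M[R]_n := x^T *m x.

Definition det_ratio (v : 'I_m -> 'rV[R]_n) (c lam : 'I_m -> R) : R :=
  \det (\sum_(i < m) lam i *: tens (v i)) / \prod_(i < m) (lam i `^ c i).

Definition Dc (v : 'I_m -> 'rV[R]_n) (c : 'I_m -> R) : R :=
  inf [set det_ratio v c lam | lam in [set lam : 'I_m -> R | forall i, 0 < lam i]].

End Defs.

(* Main.v *)
Set Warnings "-notation-overridden -ambiguous-paths -notation-incompatible-prefix".
Require Import Defs.
From HB Require Import structures.
From mathcomp Require Import all_boot all_order all_algebra.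
From mathcomp Require Import all_classical all_reals all_analysis.
From mathcomp Require Import ring.
From mathcomp Require Import fingroup perm.
From Stdlib Require Import Relations.
Import Order.TTheory GRing.Theory Num.Theory.
Local Open Scope ring_scope.
Lemma CB (R : comNzRingType) n m (x y : 'I_m -> 'rV[R]_n) :
  (n`!)%:R * \det (\sum_i (x i)^T *m (y i)) =
  \sum_(f : {ffun 'I_n -> 'I_m}) \det (\matrix_(r < n) x (f r)) * \det (\matrix_(r < n) y (f r)).
Proof.
set M := \sum_i _.
have ME a b : M a b = \sum_i x i 0 a * y i 0 b.
  rewrite /M summxE; apply: eq_bigr => i _.
  by rewrite !mxE big_ord1 !mxE.
have -> : \sum_(f : {ffun 'I_n -> 'I_m}) \det (\matrix_(r < n) x (f r)) * \det (\matrix_(r < n) y (f r))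
   = \sum_(t : 'S_n) \sum_(s : 'S_n) (-1) ^+ t * (-1) ^+ s *
        \sum_(f : {ffun 'I_n -> 'I_m}) \prod_r (x (f r) 0 (t r) * y (f r) 0 (s r)).
  transitivity (\sum_(f : {ffun 'I_n -> 'I_m}) \sum_(t : 'S_n) \sum_(s : 'S_n) (-1) ^+ t * (-1) ^+ s *
         \prod_r (x (f r) 0 (t r) * y (f r) 0 (s r))).
    apply: eq_bigr => f _; rewrite /(\det _) mulr_suml; apply: eq_bigr => t _.
    rewrite mulr_sumr; apply: eq_bigr => s _.
    have E1 : \prod_i (\matrix_(r < n) x (f r)) i (t i) = \prod_i x (f i) 0 (t i).
      by apply: eq_bigr => i _; rewrite mxE.
    have E2 : \prod_i (\matrix_(r < n) y (f r)) i (s i) = \prod_i y (f i) 0 (s i).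
      by apply: eq_bigr => i _; rewrite mxE.
    rewrite E1 E2.
    by rewrite big_split /= mulrACA.
  rewrite exchange_big; apply: eq_bigr => t _.
  rewrite exchange_big; apply: eq_bigr => s _.
  by rewrite mulr_sumr.
have H (t s : 'S_n) : \sum_(f : {ffun 'I_n -> 'I_m}) \prod_r (x (f r) 0 (t r) * y (f r) 0 (s r))
   = \prod_r M (t r) (s r).
  rewrite [RHS](eq_bigr (fun r => \sum_i x i 0 (t r) * y i 0 (s r))); last by move=> r _; rewrite ME.
  by rewrite bigA_distr_bigA.
under eq_bigr => t _ do under eq_bigr => s _ do rewrite H.
transitivity (\sum_(t : 'S_n) \det M).
  by rewrite sumr_const card_Sn mulr_natl.
apply: eq_bigr => t _.
have D : \det (row_perm t M) = (-1) ^+ t * \det M by rewrite row_permE det_mulmx det_perm.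
have : (-1) ^+ t * \det (row_perm t M) = \det M by rewrite D mulrA -signr_addb addbb expr0 mul1r.
move=> <-; rewrite /(\det (row_perm t M)) mulr_sumr; apply: eq_bigr => s _.
rewrite mulrA; congr (_ * _); apply: eq_bigr => r _; by rewrite mxE.
Qed.

Lemma CBv (R : realType) n m (v : 'I_m -> 'rV[R]_n) (g : 'I_m -> R) :
  (n`!)%:R * \det (\sum_(i < m) g i *: tens (v i)) =
  \sum_(f : {ffun 'I_n -> 'I_m}) (\prod_r g (f r)) * (\det (\matrix_(r < n) v (f r)))^+2.
Proof.
have -> : \sum_(i < m) g i *: tens (v i) = \sum_i (g i *: v i)^T *m v i.
  by apply: eq_bigr => i _; rewrite /tens linearZ /= scalemxAl.
rewrite CB; apply: eq_bigr => f _.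
have -> : \matrix_(r < n) (g (f r) *: v (f r)) = diag_mx (\row_r g (f r)) *m \matrix_(r < n) v (f r).
  by rewrite mul_diag_mx; apply/matrixP => a b; rewrite !mxE.
rewrite det_mulmx det_diag expr2 mulrA; congr (_ * _ * _).
by apply: eq_bigr => r _; rewrite mxE.
Qed.

Lemma lagrange (R : comNzRingType) (I : finType) (d x y : I -> R) :
  ((\sum_i d i * x i ^+ 2) * (\sum_j d j * y j ^+ 2)) *+ 2 - (\sum_i d i * (x i * y i)) ^+ 2 *+ 2 =
  \sum_i \sum_j d i * d j * (x i * y j - x j * y i) ^+ 2.
Proof.
set A := \sum_i d i * x i ^+ 2; set B := \sum_j d j * y j ^+ 2; set C := \sum_i d i * (x i * y i).
rewrite [RHS](eq_bigr (fun i => d i * x i ^+ 2 * B + A * (d i * y i ^+ 2) - (d i * (x i * y i) * C) *+ 2)).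
  rewrite sumrB big_split /= sumrMnl -mulr_suml -mulr_sumr -mulr_suml.
  rewrite -/A -/B -/C; ring.
move=> i _.
rewrite /A /B /C mulr_sumr mulr_suml mulr_sumr -sumrMnl -big_split /= -sumrB.
apply: eq_bigr => j _; ring.
Qed.

Lemma bow_fun (R : realType) n m (v : 'I_m -> 'rV[R]_n) (l : seq 'I_m) (i0 : 'I_m) :
  is_basis (map v l) ->
  exists f : {ffun 'I_n -> 'I_m},
    \det (\matrix_(r < n) v (f r)) != 0 /\ (forall r : 'I_n, f r = nth i0 l r) /\ n = size l.
Proof.
case/andP => /eqP e hf.
have el : size l = n by rewrite -e size_map.
exists [ffun r : 'I_n => nth i0 l r]; split; last first.
  by split=> // r; rewrite ffunE.
have -> : \matrix_(r < n) v ([ffun r : 'I_n => nth i0 l r] r) =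
   castmx (e, erefl) (\matrix_(k < size (map v l)) nth 0 (map v l) k).
  apply/matrixP => a b; rewrite castmxE !mxE ffunE /= (nth_map i0) //; last by rewrite el.
  by rewrite cast_ord_id.
by rewrite -unitfE -unitmxE -row_free_unit row_free_castmx.
Qed.

Lemma prod_nth (R : comNzRingType) n m (h : 'I_m -> R) (f : {ffun 'I_n -> 'I_m}) (l : seq 'I_m) i0 :
  (forall r : 'I_n, f r = nth i0 l r) -> n = size l ->
  \prod_(r < n) h (f r) = \prod_(k <- l) h k.
Proof.
move=> hf e; rewrite (big_nth i0) -e big_mkord; apply: eq_bigr => r _.
by rewrite hf.
Qed.

Theorem proposition8 (R : realType) (n m : nat) (v : 'I_m -> 'rV[R]_n)
    (c lam mu : 'I_m -> R) :
  (n <= m)%N ->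
  (forall i, v i != 0) ->
  spans v ->
  irreducible_family v ->
  (forall i, 0 < c i) ->
  \sum_(i < m) c i = n%:R ->
  (forall i, 0 < lam i) ->
  (forall i, 0 < mu i) ->
  det_ratio v c lam = Dc v c ->
  det_ratio v c mu = Dc v c ->
  exists r : R, forall i, lam i = r * mu i.
Proof.
case: m v c lam mu => [|m] v c lam mu hnm hv hsp hirr hc hsum hl hm Hl Hm.
  by exists 0 => -[].
pose A (g : 'I_m.+1 -> R) := \det (\sum_(i < m.+1) g i *: tens (v i)).
pose E (g : 'I_m.+1 -> R) := \prod_(i < m.+1) (g i `^ c i).
have Ep g : (forall i, 0 < g i) -> 0 < E g.
  by move=> hg; apply: prodr_gt0 => i _; apply: powR_gt0.
have nfp : 0 < (n`!%:R : R) by rewrite ltr0n fact_gt0.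
have Adet g : A g = (n`!%:R)^-1 * \sum_(f : {ffun 'I_n -> 'I_m.+1})
     (\det (\matrix_(r < n) v (f r)))^+2 * (\prod_r g (f r)) ^+ 1.
  rewrite /A; apply: (mulfI (lt0r_neq0 nfp)); rewrite CBv mulVKf ?lt0r_neq0 //.
  by apply: eq_bigr => f _; rewrite expr1 mulrC.
have Age g : (forall i, 0 < g i) -> 0 <= A g.
  move=> hg; rewrite Adet; apply: mulr_ge0; first by rewrite invr_ge0 ltW.
  apply: sumr_ge0 => f _.
  by rewrite mulr_ge0 ?sqr_ge0 // expr1 prodr_ge0 // => r _; rewrite ltW.
have dr g : det_ratio v c g = A g / E g by [].
have Dge : 0 <= Dc v c by rewrite -Hl dr divr_ge0 ?Age ?ltW ?Ep.
pose sl i := Num.sqrt (lam i); pose sm i := Num.sqrt (mu i).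
have slp i : 0 < sl i by rewrite sqrtr_gt0.
have smp i : 0 < sm i by rewrite sqrtr_gt0.
pose nu i := sl i * sm i.
have nup i : 0 < nu i by rewrite mulr_gt0.
have Dle : Dc v c <= det_ratio v c nu.
  apply: ge_inf; last by exists nu.
  exists 0 => y [g hg <-]; rewrite dr divr_ge0 ?Age ?ltW ?Ep //.
have Anu : Dc v c * E nu <= A nu by rewrite -ler_pdivlMr ?Ep.
have Enu : E nu ^+ 2 = E lam * E mu.
  rewrite -prodrXl -big_split /=; apply: eq_bigr => i _.
  rewrite expr2 -powRM ?ltW // -powRM ?ltW //; congr (_ `^ _).
  by rewrite /nu mulrACA -!expr2 !sqr_sqrtr ?ltW.
have Al : A lam = Dc v c * E lam by rewrite -Hl dr divfK ?lt0r_neq0 ?Ep.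
have Am : A mu = Dc v c * E mu by rewrite -Hm dr divfK ?lt0r_neq0 ?Ep.
have key : A lam * A mu <= A nu ^+ 2.
  rewrite Al Am mulrACA -expr2 -Enu -exprMn expr2 [X in _ <= X]expr2.
  by apply: ler_pM => //; rewrite mulr_ge0 // ltW ?Ep.
pose d (f : {ffun 'I_n -> 'I_m.+1}) := (\det (\matrix_(r < n) v (f r)))^+2.
pose x (f : {ffun 'I_n -> 'I_m.+1}) := \prod_r sl (f r).
pose y (f : {ffun 'I_n -> 'I_m.+1}) := \prod_r sm (f r).
pose k : R := (n`!%:R)^-1.
have kp : 0 < k by rewrite invr_gt0.
have Al' : A lam = k * \sum_f d f * x f ^+ 2.
  rewrite Adet; congr (_ * _); apply: eq_bigr => f _; congr (_ * _).
  rewrite expr1 -prodrXl; apply: eq_bigr => r _; by rewrite sqr_sqrtr ?ltW.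
have Am' : A mu = k * \sum_f d f * y f ^+ 2.
  rewrite Adet; congr (_ * _); apply: eq_bigr => f _; congr (_ * _).
  rewrite expr1 -prodrXl; apply: eq_bigr => r _; by rewrite sqr_sqrtr ?ltW.
have An' : A nu = k * \sum_f d f * (x f * y f).
  rewrite Adet; congr (_ * _); apply: eq_bigr => f _; congr (_ * _).
  by rewrite expr1 -big_split.
have key2 : (\sum_f d f * x f ^+ 2) * (\sum_f d f * y f ^+ 2) <= (\sum_f d f * (x f * y f)) ^+ 2.
  move: key; rewrite Al' Am' An' mulrACA -expr2 exprMn ler_pM2l //.
  by rewrite exprn_gt0.
have L := @lagrange _ _ d x y.
have Z0 : \sum_f \sum_g d f * d g * (x f * y g - x g * y f) ^+ 2 = 0.
  apply/le_anti/andP; split; last first.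
    by apply: sumr_ge0 => f _; apply: sumr_ge0 => g _; rewrite mulr_ge0 ?sqr_ge0 // mulr_ge0 ?sqr_ge0.
  by rewrite -L -mulrnBl mulrn_wle0 // subr_le0.
have Z f g : d f * d g * (x f * y g - x g * y f) ^+ 2 = 0.
  have Z1 := psumr_eq0P (fun f' (_ : true) => sumr_ge0 _ (fun g' (_ : true) =>
       mulr_ge0 (mulr_ge0 (sqr_ge0 _) (sqr_ge0 _)) (sqr_ge0 (x f' * y g' - x g' * y f')))) Z0.
  apply: (psumr_eq0P _ (Z1 f isT)) => // g' _.
  by rewrite mulr_ge0 ?sqr_ge0 // mulr_ge0 ?sqr_ge0.
have rel i j : bowtie v i j -> lam i * mu j = lam j * mu i.
  case=> K [_ [Bi Bj]].
  have [f [df [hf ef]]] := @bow_fun R n m.+1 v (i :: enum K) i Bi.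
  have [g [dg [hg eg]]] := @bow_fun R n m.+1 v (j :: enum K) j Bj.
  have xf : x f = sl i * \prod_(k <- enum K) sl k by rewrite /x (@prod_nth _ _ _ _ _ _ _ hf ef) big_cons.
  have yf : y f = sm i * \prod_(k <- enum K) sm k by rewrite /y (@prod_nth _ _ _ _ _ _ _ hf ef) big_cons.
  have xg : x g = sl j * \prod_(k <- enum K) sl k by rewrite /x (@prod_nth _ _ _ _ _ _ _ hg eg) big_cons.
  have yg : y g = sm j * \prod_(k <- enum K) sm k by rewrite /y (@prod_nth _ _ _ _ _ _ _ hg eg) big_cons.
  have := Z f g; move/eqP; rewrite /d !mulf_eq0 (negPf df) (negPf dg) /= orbb subr_eq0.
  rewrite xf yg xg yf => /eqP H.
  have TLp : 0 < \prod_(k <- enum K) sl k by apply: prodr_gt0.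
  have TMp : 0 < \prod_(k <- enum K) sm k by apply: prodr_gt0.
  have H2 : sl i * sm j = sl j * sm i.
    apply: (mulIf (lt0r_neq0 (mulr_gt0 TLp TMp))).
    by rewrite mulrACA H mulrACA.
  have := congr1 (fun t => t ^+ 2) H2; rewrite /= !exprMn /sl /sm !sqr_sqrtr ?ltW //.
have rt i j : clos_refl_trans _ (bowtie v) i j -> lam i * mu j = lam j * mu i.
  elim=> [a b /rel //| a // | a b e _ H1 _ H2].
  apply: (mulIf (lt0r_neq0 (mulr_gt0 (hl b) (hm b)))).
  transitivity (lam a * mu b * (lam b * mu e)); first by ring.
  by rewrite H1 H2; ring.
exists (lam ord0 / mu ord0) => i.
have := rt _ _ (hirr ord0 i).
by move=> H; rewrite mulrAC H mulfK // lt0r_neq0.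
Qed.
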